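(* Let $V$ be a finite nonempty set and $f:\{0,1\}^V\to\{0,1\}^V$. (1) $f$ is positive-circular if and only if $f$ is 2-critical and non-expansive. (2) $f$ is negative-circular if and only if $f$ is 0-critical and non-expansive.
   Context: For $x,y\in\{0,1\}^V$, $d(x,y)$ is the Hamming distance; $f$ is non-expansive if $d(f(x),f(y))\le d(x,y)$ for all $x,y$. For nonempty $I\subseteq V$ and $z\in\{0,1\}^{V\setminus I}$, the subnetwork of $f$ induced by $z$ is $h:\{0,1\}^I\to\{0,1\}^I$ with $h(x|_I)=f(x)|_I$ for all $x$ whose restriction to $V\setminus I$ is $z$; a strict subnetwork is a subnetwork different from $f$. $f$ is 2-critical if $f$ has at least two fixed points and every strict subnetwork of $f$ has at most one fixed point; $f$ is 0-critical if $f$ has no fixed point and every strict subnetwork of $f$ has at least one fixed point. For $x^{j\alpha}$ the point equal to $x$ except its $j$-component is $\alpha$, the global interaction graph $G(f)$ is the signed digraph on $V$ with a positive (resp. negative) arc from $j$ to $i$ iff $f_i(x^{j1})-f_i(x^{j0})=1$ (resp. $=-1$) for at least one $x$. A cycle is a subgraph with at most one arc between any ordered pair of vertices whose underlying unsigned digraph is a directed cycle; positive (negative) if it has an even (odd) number of negative arcs. $f$ is positive-circular (negative-circular) if $G(f)$ itself is a positive (negative) cycle through all vertices of $V$. *)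

(* Defs.v *)
From mathcomp Require Import all_boot.
Set Implicit Arguments. Unset Strict Implicit. Unset Printing Implicit Defensive.

Section BN.
Variable V : finType.

Definition config := {ffun V -> bool}.

Definition hdist (x y : config) : nat := #|[set i | x i != y i]|.

Definition non_expansive (f : config -> config) : Prop :=
  forall x y, hdist (f x) (f y) <= hdist x y.

Definition setc (x : config) (j : V) (a : bool) : config :=
  [ffun k => if k == j then a else x k].

Definition fixed_points (f : config -> config) : {set config} :=
  [set x : config | f x == x].

(* Fixed points of the subnetwork h of f induced by z in {0,1}^(V\I):
   a fixed point y in {0,1}^I of h corresponds bijectively to the
   configuration x with x|_I = y and x|_(V\I) = z; it is a fixed point
   iff f(x)|_I = x|_I.  Here z is given as a full configuration of which
   only the restriction to V\I is used. *)
Definition sub_fixed_points (f : config -> config) (I : {set V}) (z : config)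
  : {set config} :=
  [set x : config | [forall i, (i \notin I) ==> (x i == z i)]
           && [forall i in I, f x i == x i]].

(* A subnetwork (I, z) is strict iff I <> V (for I = V it is f itself;
   for I a proper subset its domain differs from {0,1}^V). *)
Definition two_critical (f : config -> config) : Prop :=
  1 < #|fixed_points f| /\
  forall (I : {set V}) (z : config),
    I != set0 -> I \proper [set: V] -> #|sub_fixed_points f I z| <= 1.

Definition zero_critical (f : config -> config) : Prop :=
  #|fixed_points f| = 0 /\
  forall (I : {set V}) (z : config),
    I != set0 -> I \proper [set: V] -> 1 <= #|sub_fixed_points f I z|.

Definition pos_arc (f : config -> config) (j i : V) : bool :=
  [exists x : config, f (setc x j true) i && ~~ f (setc x j false) i].
Definition neg_arc (f : config -> config) (j i : V) : bool :=
  [exists x : config, ~~ f (setc x j true) i && f (setc x j false) i].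

(* G(f) itself is a cycle through all vertices: at most one signed arc
   between any ordered pair, and the underlying unsigned digraph is the
   directed cycle given by a duplicate-free enumeration s of V
   (arc j -> next s j). *)
Definition hamiltonian_cycle_graph (f : config -> config) (s : seq V) : Prop :=
  [/\ uniq s, (forall v, v \in s),
      (forall j i, (pos_arc f j i || neg_arc f j i) = (i == next s j)) &
      (forall j i, ~~ (pos_arc f j i && neg_arc f j i))].

Definition num_neg_arcs (f : config -> config) (s : seq V) : nat :=
  #|[set j | neg_arc f j (next s j)]|.

Definition positive_circular (f : config -> config) : Prop :=
  exists s : seq V, hamiltonian_cycle_graph f s /\ ~~ odd (num_neg_arcs f s).

Definition negative_circular (f : config -> config) : Prop :=
  exists s : seq V, hamiltonian_cycle_graph f s /\ odd (num_neg_arcs f s).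

End BN.

(* Main.v *)
Require Import Defs.
From mathcomp Require Import all_boot zify.
Set Implicit Arguments. Unset Strict Implicit. Unset Printing Implicit Defensive.

Section Basics.
Variable V : finType.
Local Notation cfg := (config V).

Definition zero : cfg := [ffun _ => false].
Definition compl (x : cfg) : cfg := [ffun j => ~~ x j].
Definition tr (x u : cfg) : cfg := [ffun j => u j (+) x j].
Definition flip (i : V) (u : cfg) : cfg := [ffun j => u j (+) (j == i)].
Definition ind (A : {set V}) : cfg := [ffun j => j \in A].
Definition supp (u : cfg) : {set V} := [set j | u j].
Definition dD (D : {set V}) (a b : cfg) := #|[set j in D | a j != b j]|.

Lemma hdistE (a b : cfg) : hdist a b = dD setT a b.
Proof. by rewrite /hdist /dD; apply: eq_card => j; rewrite !inE. Qed.

Lemma dD_le (D : {set V}) (a b : cfg) : dD D a b <= hdist a b.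
Proof.
rewrite /dD /hdist; apply: subset_leq_card; apply/subsetP => j.
by rewrite !inE => /andP[].
Qed.

Lemma dD_compl (D : {set V}) (a b : cfg) : dD D a b + dD D a (compl b) = #|D|.
Proof.
rewrite /dD -(cardsID [set j | a j != b j] D); congr (_ + _); apply: eq_card => j;
by rewrite !inE ?ffunE; case: (j \in D); case: (a j); case: (b j).
Qed.

Lemma hdist_compl (a b : cfg) : hdist a b + hdist a (compl b) = #|V|.
Proof. by rewrite !hdistE dD_compl cardsT. Qed.

Lemma dD_eq (D : {set V}) (a b b' : cfg) : (forall j, j \in D -> b j = b' j) -> dD D a b = dD D a b'.
Proof.
move=> H; rewrite /dD; apply: eq_card => j; rewrite !inE.
by case jD: (j \in D) => //=; rewrite H.
Qed.

Lemma dD_flip (D : {set V}) (i : V) (a b : cfg) : i \in D ->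
  dD D a (flip i b) + (a i != b i) = dD D a b + (a i == b i).
Proof.
move=> iD; rewrite /dD (cardsD1 i [set j in D | a j != flip i b j])
  (cardsD1 i [set j in D | a j != b j]) !inE ffunE eqxx iD /=.
have -> : #|[set j in D | a j != flip i b j] :\ i| = #|[set j in D | a j != b j] :\ i|.
  apply: eq_card => j; rewrite !inE ffunE.
  by case: (j =P i) => //= _; rewrite addbF.
by case: (a i); case: (b i) => /=; lia.
Qed.

Lemma hdist_flip (i : V) (a b : cfg) :
  hdist a (flip i b) + (a i != b i) = hdist a b + (a i == b i).
Proof. by rewrite !hdistE dD_flip ?inE. Qed.

Lemma hdist_sym (a b : cfg) : hdist a b = hdist b a.
Proof. by rewrite /hdist; apply: eq_card => j; rewrite !inE eq_sym. Qed.

Lemma hdist_tr (x a b : cfg) : hdist (tr x a) (tr x b) = hdist a b.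
Proof.
by rewrite /hdist; apply: eq_card => j; rewrite !inE !ffunE; case: (x j); case: (a j); case: (b j).
Qed.

Lemma hdist_tr0 (x a : cfg) : hdist (tr x a) zero = hdist a x.
Proof.
by rewrite /hdist; apply: eq_card => j; rewrite !inE !ffunE; case: (x j); case: (a j).
Qed.

Lemma hdist_zero (u : cfg) : hdist u zero = #|supp u|.
Proof. by rewrite /hdist; apply: eq_card => j; rewrite !inE !ffunE; case: (u j). Qed.

Lemma trK (x : cfg) : involutive (tr x).
Proof. by move=> u; apply/ffunP => j; rewrite !ffunE -addbA addbb addbF. Qed.

Lemma supp_ind (A : {set V}) : supp (ind A) = A.
Proof. by apply/setP => j; rewrite !inE ffunE. Qed.

Lemma ind_supp (u : cfg) : ind (supp u) = u.
Proof. by apply/ffunP => j; rewrite !ffunE inE. Qed.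

Lemma hdist0 (a b : cfg) : (hdist a b == 0) = (a == b).
Proof.
rewrite /hdist cards_eq0; apply/eqP/eqP => [H|->].
  apply/ffunP => j; case E: (a j != b j); last by apply/eqP; move/negbFE: E.
  have : j \in [set i | a i != b i] by rewrite inE E.
  by rewrite H inE.
by apply/setP => j; rewrite !inE eqxx.
Qed.

End Basics.
Arguments zero {V}.


Section Circ.
Variable V : finType.
Local Notation cfg := (config V).

Definition par (F : V -> bool) := odd (\sum_j (F j : nat)).

Lemma par_xor (F G : V -> bool) : par (fun j => F j (+) G j) = par F (+) par G.
Proof.
rewrite /par.
have E : \sum_j ((F j (+) G j) : nat) + (\sum_j (F j && G j : nat)).*2
         = \sum_j (F j : nat) + \sum_j (G j : nat).
  rewrite -mul2n big_distrr -!big_split /=; apply: eq_bigr => j _.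
  by case: (F j); case: (G j).
by rewrite -oddD -E oddD odd_double addbF.
Qed.

Lemma par_reindex (h : V -> V) (F : V -> bool) : injective h ->
  par (fun j => F (h j)) = par F.
Proof. by move=> hi; rewrite /par [in RHS](reindex_inj hi). Qed.

Lemma par_single (a : V) (F : V -> bool) : (forall j, j != a -> F j = false) -> par F = F a.
Proof.
move=> H; rewrite /par (bigD1 a) //= big1 ?addn0; first by case: (F a).
by move=> j ja; rewrite H.
Qed.

Lemma eq_par (F G : V -> bool) : (forall j, F j = G j) -> par F = par G.
Proof. by move=> H; rewrite /par; congr odd; apply: eq_bigr => j _; rewrite H. Qed.

Lemma par_card (F : V -> bool) : par F = odd #|[set j | F j]|.
Proof.
rewrite /par -sum1_card [in RHS]big_mkcond /=; congr odd; apply: eq_bigr => j _.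
by rewrite inE; case: (F j).
Qed.

Variable f : cfg -> cfg.

Definition CF (s : seq V) (c : V -> bool) :=
  [/\ uniq s, forall v, v \in s & forall u j, f u (next s j) = u j (+) c j].

Section WithCF.
Variables (s : seq V) (c : V -> bool).
Hypothesis hCF : CF s c.

Let Us : uniq s. Proof. by case: hCF. Qed.
Let Hs : forall v, v \in s. Proof. by case: hCF. Qed.
Let Hf : forall u j, f u (next s j) = u j (+) c j. Proof. by case: hCF. Qed.

Lemma next_inj : injective (next s).
Proof. exact: (can_inj (prev_next Us)). Qed.

Lemma next_conn a y : fconnect (next s) a y.
Proof. by rewrite (fconnect_cycle (cycle_next Us) (Hs a)) Hs. Qed.

Lemma CF_pos j i : pos_arc f j i = (i == next s j) && ~~ c j.
Proof.
rewrite -(next_prev Us i); set k := prev s i.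
rewrite (inj_eq next_inj) /pos_arc.
apply/existsP/idP => [[x]|H].
  by rewrite !Hf /setc !ffunE; case: (k =P j) => [->|_] /=; [case: (c j)|case: (x k); case: (c k)].
exists zero; move: H; rewrite !Hf /setc !ffunE; case: (k =P j) => //= ->.
by case: (c j).
Qed.

Lemma CF_neg j i : neg_arc f j i = (i == next s j) && c j.
Proof.
rewrite -(next_prev Us i); set k := prev s i.
rewrite (inj_eq next_inj) /neg_arc.
apply/existsP/idP => [[x]|H].
  by rewrite !Hf /setc !ffunE; case: (k =P j) => [->|_] /=; [case: (c j)|case: (x k); case: (c k)].
exists zero; move: H; rewrite !Hf /setc !ffunE; case: (k =P j) => //= ->.
by case: (c j).
Qed.

Lemma CF_graph : hamiltonian_cycle_graph f s.
Proof.
split => // [j i|j i]; rewrite CF_pos CF_neg.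
  by case: (i == next s j); case: (c j).
by case: (i == next s j); case: (c j).
Qed.

Lemma CF_num : num_neg_arcs f s = #|[set j | c j]|.
Proof.
rewrite /num_neg_arcs; apply: eq_card => j; by rewrite !inE CF_neg eqxx.
Qed.

Lemma CF_nonexp : non_expansive f.
Proof.
move=> u v; rewrite /hdist.
have -> : [set i | f u i != f v i] = next s @: [set j | u j != v j].
  apply/setP => i; rewrite -(next_prev Us i) mem_imset; last exact: next_inj.
  by rewrite !inE !Hf; case: (c (prev s i)); case: (u (prev s i)); case: (v (prev s i)).
by rewrite card_imset //; exact: next_inj.
Qed.

Lemma CF_par x : par c = par (fun j => f x j (+) x j).
Proof.
rewrite (@eq_par c (fun j => x j (+) f x (next s j))); last first.
  by move=> j; rewrite Hf; case: (x j); case: (c j).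
rewrite par_xor (@par_reindex _ (f x) next_inj) par_xor.
by rewrite addbC.
Qed.

Lemma CF_fixed_even x : f x = x -> par c = false.
Proof.
move=> fx; rewrite (CF_par x) fx /par big1 // => j _.
by rewrite addbb.
Qed.

Lemma CF_sub_exists (I : {set V}) (z : cfg) (a : V) : a \notin I ->
  exists x : cfg, (forall j, j \notin I -> x j = z j) /\ (forall j, j \in I -> f x j = x j).
Proof.
move=> aI.
pose sg := next s.
pose val := fix val k := if k is k'.+1 then
    (if iter k sg a \in I then val k' (+) c (iter k' sg a) else z (iter k sg a))
    else z a.
have valI : forall k, iter k sg a \notin I -> val k = z (iter k sg a).
  by case => [|k] //= /negbTE ->.
exists [ffun y => val (findex sg a y)]; split => [j jI|j jI]; rewrite !ffunE.
  have E := iter_findex (next_conn a j).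
  by rewrite valI E.
have E := iter_findex (next_conn a j).
have lt := findex_max (next_conn a j).
move: E lt; case: (findex sg a j) => [|k] /=.
  by move=> E; rewrite -E (negbTE aI) in jI.
move=> E lt; rewrite -E in jI *; rewrite jI /sg Hf; congr (_ (+) _).
by rewrite ffunE findex_iter // ltnW.
Qed.

Lemma CF_sub_uniq (I : {set V}) (a : V) (x y : cfg) : a \notin I ->
  (forall j, j \notin I -> x j = y j) ->
  (forall j, j \in I -> f x j = x j) -> (forall j, j \in I -> f y j = y j) -> x = y.
Proof.
move=> aI Hxy Fx Fy.
have K : forall k, x (iter k (next s) a) = y (iter k (next s) a).
  elim => [|k IH] /=; first exact: Hxy.
  case: (boolP (next s (iter k (next s) a) \in I)) => H; last exact: Hxy.
  by rewrite -(Fx _ H) -(Fy _ H) !Hf IH.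
apply/ffunP => j; by rewrite -(iter_findex (next_conn a j)).
Qed.

Lemma CF_two : 0 < #|V| -> par c = false -> 1 < #|fixed_points f|.
Proof.
move=> /card_gt0P [a _] pc.
have fixb : forall b, exists x : cfg, x a = b /\ f x = x.
  move=> b; have [|x [Hx1 Hx2]] := @CF_sub_exists [set~ a] [ffun _ => b] a.
    by rewrite !inE eqxx.
  exists x; split; first by rewrite Hx1 ?ffunE // !inE eqxx.
  have ex : forall j, j != a -> f x j = x j.
    by move=> j ja; rewrite Hx2 // !inE.
  apply/ffunP => j; case: (j =P a) => [->|/eqP ja]; last exact: ex.
  have := CF_par x; rewrite pc (@par_single a) => [|k ka]; last by rewrite ex ?addbb.
  by case: (f x a); case: (x a).
have [x0 [x0a fx0]] := fixb false; have [x1 [x1a fx1]] := fixb true.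
apply/card_gt1P; exists x0, x1; rewrite !inE fx0 fx1 !eqxx; split => //.
by apply/eqP => E; move: x0a; rewrite E x1a.
Qed.

Lemma CF_subfix_le1 (I : {set V}) (z : cfg) : I \proper [set: V] ->
  #|sub_fixed_points f I z| <= 1.
Proof.
rewrite properT => IT.
have [a aI] : exists a, a \notin I.
  apply/existsP; apply: contraR IT => /existsPn H; apply/eqP/setP => a.
  by rewrite inE; move: (H a); rewrite negbK.
apply/card_le1_eqP => x y; rewrite !inE => /andP[/forallP Hx /forall_inP Fx] /andP[/forallP Hy /forall_inP Fy].
have : x = y.
  apply: (CF_sub_uniq aI) => [j jI|j /Fx /eqP //|j /Fy /eqP //].
  by move: (Hx j) (Hy j); rewrite (negbTE jI) /= => /eqP -> /eqP ->.
by move=> ->.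
Qed.

Lemma CF_subfix_ge1 (I : {set V}) (z : cfg) : I \proper [set: V] ->
  1 <= #|sub_fixed_points f I z|.
Proof.
rewrite properT => IT.
have [a aI] : exists a, a \notin I.
  apply/existsP; apply: contraR IT => /existsPn H; apply/eqP/setP => a.
  by rewrite inE; move: (H a); rewrite negbK.
have [x [Hx Fx]] := CF_sub_exists z aI.
apply/card_gt0P; exists x; rewrite inE; apply/andP; split.
  by apply/forallP => j; apply/implyP => jI; rewrite Hx.
by apply/forall_inP => j jI; rewrite Fx.
Qed.

End WithCF.
End Circ.


Section Graph.
Variable V : finType.
Local Notation cfg := (config V).
Variable f : cfg -> cfg.

Lemma setcE (x : cfg) k b j : setc x k b j = if j == k then b else x j.
Proof. by rewrite /setc ffunE. Qed.

Lemma no_arc_const k i : ~~ pos_arc f k i -> ~~ neg_arc f k i ->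
  forall (x : cfg) b, f (setc x k b) i = f x i.
Proof.
move=> /existsPn Hp /existsPn Hn x b.
have E : f (setc x k true) i = f (setc x k false) i.
  by move: (Hp x) (Hn x); case: (f (setc x k true) i); case: (f (setc x k false) i).
have HH : x = setc x k (x k).
  by apply/ffunP => j; rewrite setcE; case: (j =P k) => [->|].
rewrite [in RHS]HH; case: b; case: (x k) => //; by rewrite E.
Qed.

Lemma dep_only i j : (forall k, k != j -> ~~ pos_arc f k i && ~~ neg_arc f k i) ->
  forall u v : cfg, u j = v j -> f u i = f v i.
Proof.
move=> H u v; move Hn: (hdist u v) => n; elim: n u Hn => [|n IH] u Hn uv.
  by move/eqP: Hn; rewrite hdist0 => /eqP ->.
have [k kin] : exists k, k \in [set k | u k != v k].
  by apply/card_gt0P; rewrite -/(hdist u v) Hn.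
have kj : k != j by apply/eqP => E; move: kin; rewrite inE E uv eqxx.
have /andP[Hp Hq] := H k kj.
rewrite -(no_arc_const Hp Hq u (v k)); apply: IH; last first.
  by rewrite setcE eq_sym (negbTE kj).
move: Hn; rewrite /hdist (cardsD1 k) kin.
have -> : [set l | setc u k (v k) l != v l] = [set l | u l != v l] :\ k.
  apply/setP => l; rewrite !inE setcE; case: (l =P k) => [->|]; by rewrite ?eqxx.
by move=> [].
Qed.

Lemma graph_CF s : hamiltonian_cycle_graph f s -> CF f s (fun j => neg_arc f j (next s j)).
Proof.
move=> [Us Hs Harc Hnb]; split => // u j.
set i := next s j.
have Hdep : forall u v : cfg, u j = v j -> f u i = f v i.
  apply: dep_only => k kj.
  have : ~~ (pos_arc f k i || neg_arc f k i).
    by rewrite Harc /i (inj_eq (can_inj (prev_next Us))) eq_sym.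
  by rewrite negb_or.
pose h b := f (setc zero j b) i.
have hE : forall (x : cfg) b, f (setc x j b) i = h b.
  by move=> x b; apply: Hdep; rewrite !setcE eqxx.
have Hp : pos_arc f j i = h true && ~~ h false.
  apply/existsP/idP => [[x]|H0]; first by rewrite !hE.
  by exists zero; rewrite !hE.
have Hq : neg_arc f j i = ~~ h true && h false.
  apply/existsP/idP => [[x]|H0]; first by rewrite !hE.
  by exists zero; rewrite !hE.
have A := Harc j i; rewrite eqxx Hp Hq in A.
rewrite Hq (Hdep u (setc zero j (u j))); last by rewrite setcE eqxx.
rewrite -/(h (u j)); move: A; case: (u j); case: (h true); case: (h false) => //.
Qed.

End Graph.


Section Core.
Variable V : finType.
Local Notation cfg := (config V).

Lemma hdist_supp (a b : cfg) : hdist a b = #|supp a :\: supp b| + #|supp b :\: supp a|.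
Proof.
rewrite /hdist -(cardsID (supp a) [set i | a i != b i]); congr (_ + _);
  apply: eq_card => j; rewrite !inE; by case: (a j); case: (b j).
Qed.

Variable g : cfg -> cfg.
Hypothesis N : non_expansive g.
Hypothesis W : forall u, #|supp (g u)| = #|supp u|.

Lemma mono (u v : cfg) : supp u \subset supp v -> supp (g u) \subset supp (g v).
Proof.
move=> uv.
have H1 := N u v; rewrite !hdist_supp in H1.
have E : supp u :\: supp v = set0 by apply/eqP; rewrite setD_eq0.
rewrite E cards0 add0n in H1.
have C1 := cardsID (supp u) (supp v).
rewrite (setIidPr uv) in C1.
have C2 := cardsID (supp (g v)) (supp (g u)).
have C3 := cardsID (supp (g u)) (supp (g v)).
rewrite setIC in C3.
have W1 := W u; have W2 := W v.
have : #|supp (g u) :\: supp (g v)| == 0 by apply/eqP; lia.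
by rewrite cards_eq0 setD_eq0.
Qed.

Lemma supp_ind1 (A : {set V}) j : j \in A -> [set j] \subset A.
Proof. by move=> jA; rewrite sub1set. Qed.

Hypothesis hV : 0 < #|V|.
Hypothesis Q : forall A : {set V}, A != set0 -> g (ind A) = ind A -> A = setT.

Lemma core : exists sig : V -> V, [/\ injective sig, (forall j k, fconnect sig j k) &
   forall u j, g u (sig j) = u j].
Proof.
have Hs : forall j, exists k, supp (g (ind [set j])) == [set k].
  move=> j; have /cards1P [k Hk] : #|supp (g (ind [set j]))| == 1 by rewrite W supp_ind cards1.
  by exists k; rewrite Hk.
pose sig j := xchoose (Hs j).
have sigE : forall j, supp (g (ind [set j])) = [set sig j].
  by move=> j; apply/eqP; exact: (xchooseP (Hs j)).
have sub : forall A : {set V}, sig @: A \subset supp (g (ind A)).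
  move=> A; apply/subsetP => k /imsetP [j jA ->].
  have := mono (u := ind [set j]) (v := ind A); rewrite !supp_ind sub1set sigE => /(_ jA).
  by rewrite sub1set.
have inv : forall A : {set V}, A != set0 -> sig @: A = A -> A = setT.
  move=> A A0 sA; apply: Q => //.
  have : supp (g (ind A)) = A.
    apply/eqP; rewrite eq_sym eqEcard -{1}sA sub /= W supp_ind //.
  by move=> E; rewrite -(ind_supp (g (ind A))) E.
pose It k : {set V} := iter k (fun B : {set V} => sig @: B) setT.
have It_sub : forall k, It k.+1 \subset It k.
  elim => [|k IH]; first exact: subsetT.
  by rewrite /It /= imsetS.
have It_ne : forall k, It k != set0.
  elim => [|k IH]; first by rewrite -card_gt0 cardsT.
  by rewrite /It /= imset_eq0.
have step : forall k, (exists2 m, m < k & #|It m.+1| = #|It m|) \/ #|It k| + k <= #|V|.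
  elim => [|k [[m mk Em]|IH]]; first by right; rewrite cardsT addn0.
    by left; exists m => //; apply: ltnW.
  case: (#|It k.+1| =P #|It k|) => E; first by left; exists k.
  right; have := subset_leq_card (It_sub k); lia.
have [m _ Em] : exists2 m, m < #|V|.+1 & #|It m.+1| = #|It m|.
  by case: (step #|V|.+1) => //; lia.
have Im : sig @: It m = It m.
  apply/eqP; change (It m.+1 == It m).
  by rewrite eqEcard It_sub Em leqnn.
have ImT := inv _ (It_ne m) Im.
have siginj : injective sig.
  have : #|sig @: setT| == #|[set: V]| by rewrite -ImT Im.
  by move/imset_injP => H x y; apply: H; rewrite inE.
have gE : forall u j, g u (sig j) = u j.
  move=> u j; set A := supp u.
  have E : supp (g (ind A)) = sig @: A.
    apply/eqP; rewrite eq_sym eqEcard sub W supp_ind card_imset ?leqnn //; exact: siginj.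
  rewrite /A ind_supp in E.
  have : (sig j \in supp (g u)) = (sig j \in sig @: A) by rewrite E.
  by rewrite mem_imset // !inE.
exists sig; split => // j0.
pose C := [set k | fconnect sig j0 k].
have sC : sig @: C = C.
  apply/eqP; rewrite eqEcard card_imset // leqnn andbT.
  apply/subsetP => k /imsetP [l]; rewrite !inE => jl ->.
  exact: connect_trans jl (fconnect1 _ _).
have C0 : C != set0 by apply/set0Pn; exists j0; rewrite inE connect0.
have CT := inv C C0 sC.
move=> k; have : k \in C by rewrite CT ?inE.
by rewrite inE.
Qed.

End Core.


Section Main.
Variable V : finType.
Local Notation cfg := (config V).
Hypothesis hV : 0 < #|V|.
Variable f : cfg -> cfg.

Lemma tr0 (x : cfg) : tr x zero = x.
Proof. by apply/ffunP => j; rewrite !ffunE. Qed.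

Lemma hdist_off (D : {set V}) (a b : cfg) : (forall j, j \notin D -> a j = b j) ->
  hdist a b = dD D a b.
Proof.
move=> H; rewrite /hdist /dD; apply: eq_card => j; rewrite !inE.
by case jD: (j \in D) => //=; rewrite H ?jD // eqxx.
Qed.

Lemma dD_eq1 (D : {set V}) (a a' b : cfg) : (forall j, j \in D -> a j = a' j) ->
  dD D a b = dD D a' b.
Proof.
move=> H; rewrite /dD; apply: eq_card => j; rewrite !inE.
by case jD: (j \in D) => //=; rewrite H.
Qed.

Lemma AntiW (x a : cfg) : non_expansive f -> f x = a -> f (compl x) = compl a ->
  forall v, hdist (f v) a = hdist v x.
Proof.
move=> N fx fc v.
have H1 := N v x; have H2 := N v (compl x); rewrite fx in H1; rewrite fc in H2.
have C1 := hdist_compl (f v) a; have C2 := hdist_compl v x.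
lia.
Qed.

Section Norm.
Variables (x a : cfg).
Hypothesis N : non_expansive f.
Hypothesis HW : forall v, hdist (f v) a = hdist v x.
Definition gn (u : cfg) := tr a (f (tr x u)).

Lemma gN : non_expansive gn.
Proof. by move=> u v; rewrite /gn hdist_tr -[hdist u v](hdist_tr x) N. Qed.

Lemma gW : forall u, #|supp (gn u)| = #|supp u|.
Proof.
move=> u; rewrite -!hdist_zero /gn hdist_tr0 HW -[x in hdist _ x](tr0 x).
by rewrite hdist_tr.
Qed.

Lemma normal_form : (forall A, A != set0 -> gn (ind A) = ind A -> A = setT) ->
  exists s c, CF f s c.
Proof.
move=> Q; have [sig [inj conn E]] := core gN gW hV Q.
have [j0 _] := card_gt0P hV.
exists (orbit sig j0), (fun j => x j (+) a (sig j)); split.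
- exact: orbit_uniq.
- by move=> v; rewrite -fconnect_orbit conn.
- move=> v j.
  have -> : next (orbit sig j0) j = sig j.
    have := next_cycle (cycle_orbit inj j0) (_ : j \in orbit sig j0).
    by rewrite -fconnect_orbit conn => /(_ isT) /eqP.
  have := E (tr x v) j; rewrite /gn trK !ffunE => H.
  by move: H; case: (f v (sig j)); case: (v j); case: (x j); case: (a (sig j)).
Qed.

End Norm.

Lemma anti_fixed (x y : cfg) : two_critical f -> f x = x -> f y = y -> x != y -> y = compl x.
Proof.
move=> [_ TC] fx fy xy.
set D := [set j | x j != y j].
have D0 : D != set0.
  apply: contra xy => /eqP D0; rewrite -hdist0 /hdist -/D D0 cards0.
  by [].
case: (D =P setT) => [DT|/eqP DT].
  apply/ffunP => j; rewrite ffunE.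
  have : j \in D by rewrite DT inE.
  by rewrite inE; case: (x j); case: (y j).
have := TC D x D0; rewrite properT => /(_ DT) /card_le1_eqP H.
have Hy : y \in sub_fixed_points f D x.
  rewrite inE; apply/andP; split.
  - by apply/forallP => j; apply/implyP; rewrite inE negbK eq_sym.
  - by apply/forall_inP => j _; rewrite fy.
have Hx : x \in sub_fixed_points f D x.
  rewrite inE; apply/andP; split.
  - by apply/forallP => j; apply/implyP.
  - by apply/forall_inP => j _; rewrite fx.
have E := H _ _ Hx Hy.
by rewrite E eqxx in xy.
Qed.

Lemma hard_pos : two_critical f -> non_expansive f -> positive_circular f.
Proof.
move=> TC N; have [TC1 _] := TC.
have [x [y [xF yF xy]]] := card_gt1P TC1.
rewrite !inE in xF yF; move/eqP: xF => fx; move/eqP: yF => fy.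
have yc := anti_fixed TC fx fy xy.
have HW := AntiW N fx (etrans (congr1 f (esym yc)) (etrans fy yc)).
have [s [c hCF]] : exists s c, CF f s c.
  apply: (@normal_form x x N HW) => A A0.
  rewrite /gn => E.
  set w := tr x (ind A).
  have fw : f w = w by rewrite -[f w](trK x) /w E.
  have indA : ind A = tr x w by rewrite /w trK.
  have indAj : forall j, (j \in A) = ind A j by move=> j; rewrite ffunE.
  case: (w =P x) => [wx|/eqP wx].
    move/eqP: A0; case; apply/setP => j; rewrite inE.
    by rewrite indAj indA ffunE wx addbb.
  have wc := anti_fixed TC fx fw; rewrite eq_sym in wc.
  apply/setP => j; rewrite inE indAj indA ffunE (wc wx) ffunE.
  by case: (x j).
exists s; split; first exact: CF_graph hCF.
by rewrite (CF_num hCF) -par_card (CF_fixed_even hCF fx).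
Qed.


Lemma hard_neg : zero_critical f -> non_expansive f -> negative_circular f.
Proof.
move=> [Z0 ZC] N.
have nofix : forall x, f x != x.
  move=> x; apply/negP => /eqP fx.
  move/eqP: Z0; rewrite cards_eq0 => /eqP Z0.
  have : x \in fixed_points f by rewrite inE fx.
  by rewrite Z0 inE.
have [i _] := card_gt0P hV.
have subpt : forall b, exists x : cfg, x i = b /\ forall j, j != i -> f x j = x j.
  move=> b; case: (boolP ([set~ i] == set0)) => [/eqP E|E].
    exists [ffun _ => b]; split; first by rewrite ffunE.
    move=> j ji; have : j \in [set~ i] by rewrite !inE.
    by rewrite E inE.
  have P : [set~ i] \proper setT.
    by rewrite properT; apply/eqP => /setP /(_ i); rewrite !inE eqxx.
  have /card_gt0P [x] := ZC _ [ffun _ => b] E P.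
  rewrite inE => /andP[/forallP H1 /forall_inP H2].
  exists x; split.
    by move: (H1 i); rewrite !inE eqxx /= ffunE => /eqP.
  by move=> j ji; apply/eqP; apply: H2; rewrite !inE.
have flipform : forall x, (forall j, j != i -> f x j = x j) -> f x = flip i x.
  move=> x H; apply/ffunP => j; rewrite ffunE; case: (j =P i) => [->|/eqP ji]; last by rewrite H ?addbF.
  have fxi : f x i != x i.
    apply: contra (nofix x) => /eqP E; apply/eqP/ffunP => k.
    by case: (k =P i) => [->//|/eqP ki]; exact: H.
  by move: fxi; case: (f x i); case: (x i).
have [x [xi Hx]] := subpt false; have [y [yi Hy]] := subpt true.
have fx := flipform x Hx; have fy := flipform y Hy.
have yc : y = compl x.
  set D := [set j | x j != y j].
  have iD : i \in D by rewrite inE xi yi.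
  case: (D =P setT) => [DT|/eqP DT].
    apply/ffunP => j; rewrite ffunE; have : j \in D by rewrite DT inE.
    by rewrite inE; case: (x j); case: (y j).
  exfalso.
  have D0 : D != set0 by apply/set0Pn; exists i.
  have DP : D \proper setT by rewrite properT.
  have /card_gt0P [w] := ZC D x D0 DP.
  rewrite inE => /andP[/forallP H1 /forall_inP H2].
  have wx : forall j, j \notin D -> w j = x j.
    by move=> j jD; move: (H1 j); rewrite jD => /eqP.
  have wy : forall j, j \notin D -> w j = y j.
    by move=> j jD; rewrite wx //; move: jD; rewrite inE negbK => /eqP.
  have fwE : forall j, j \in D -> w j = f w j by move=> j jD; rewrite (eqP (H2 j jD)).
  have E1 : dD D w (flip i x) <= dD D w x.
    rewrite -(hdist_off wx) -fx (dD_eq1 _ fwE).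
    exact: leq_trans (dD_le _ _ _) (N w x).
  have E2 : dD D w (flip i y) <= dD D w y.
    rewrite -(hdist_off wy) -fy (dD_eq1 _ fwE).
    exact: leq_trans (dD_le _ _ _) (N w y).
  have yD : forall j, j \in D -> y j = ~~ x j.
    by move=> j; rewrite inE; case: (x j); case: (y j).
  rewrite (@dD_eq _ D w (flip i y) (compl (flip i x))) in E2; last first.
    by move=> j jD; rewrite !ffunE yD //; case: (x j); case: (j == i).
  rewrite (@dD_eq _ D w y (compl x)) in E2; last first.
    by move=> j jD; rewrite !ffunE yD.
  have C1 := dD_compl D w (flip i x); have C2 := dD_compl D w x.
  have F := dD_flip w x iD.
  move: F; case: (w i); case: (x i) => /=; lia.
have fc : f (compl x) = compl (flip i x).
  rewrite -yc fy yc; apply/ffunP => j; rewrite !ffunE.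
  by case: (x j); case: (j == i).
have HW := AntiW N fx fc.
have [s [c hCF]] : exists s c, CF f s c.
  apply: (@normal_form x (flip i x) N HW) => A A0 gA.
  apply/eqP; apply/negPn/negP => AT.
  pose I := if i \in A then A else ~: A.
  have iI : i \in I by rewrite /I; case: (boolP (i \in A)) => //; rewrite inE.
  have I0 : I != set0 by apply/set0Pn; exists i.
  have IP : I \proper setT.
    rewrite properT /I; case: ifP => _ //.
    apply: contra A0 => /eqP E; by rewrite -[A]setCK E setCT.
  have /card_gt0P [p] := ZC I (tr x (ind A)) I0 IP.
  rewrite inE => /andP[/forallP H1 /forall_inP H2].
  set u := tr x p.
  have MN := mono (gN x (flip i x) N) (gW HW).
  have uoff : forall j, j \notin I -> u j = (j \in A).
    move=> j jI; move: (H1 j); rewrite jI /= => /eqP pj.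
    by rewrite /u !ffunE pj !ffunE -addbA addbb addbF.
  have gon : forall j, j \in I -> gn x (flip i x) u j = u j (+) (j == i).
    move=> j jI; rewrite /gn /u trK !ffunE (eqP (H2 j jI)).
    by case: (p j); case: (x j); case: (j == i).
  have goff : forall j, j \notin I -> gn x (flip i x) u j = u j.
    move=> j jI; rewrite uoff //; move: jI; rewrite /I.
    case: (boolP (i \in A)) => iA jI.
      have sub : supp u \subset A.
        apply/subsetP => k; rewrite inE; case: (boolP (k \in A)) => // kA.
        by rewrite uoff ?(negbTE kA) // /I iA.
      have := MN u (ind A); rewrite supp_ind gA supp_ind => /(_ sub) /subsetP /(_ j).
      by rewrite (negbTE jI) inE; case: (gn x (flip i x) u j) => // /(_ isT).
    have jA : j \in A by move: jI; rewrite inE negbK.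
    have sub : A \subset supp u.
      by apply/subsetP => k kA; rewrite inE uoff // /I (negbTE iA) inE negbK.
    have := MN (ind A) u; rewrite supp_ind gA supp_ind => /(_ sub) /subsetP /(_ j jA).
    by rewrite inE jA.
  have gu : gn x (flip i x) u = flip i u.
    apply/ffunP => j; rewrite [RHS]ffunE.
    case: (boolP (j \in I)) => jI; first exact: gon.
    have ji : j != i by apply: contraNneq jI => ->.
    by rewrite goff // (negbTE ji) addbF.
  have := gW HW u; rewrite gu -!hdist_zero hdist_sym [hdist u _]hdist_sym.
  have := hdist_flip i zero u; rewrite ffunE.
  case: (u i) => /=; lia.
exists s; split; first exact: CF_graph hCF.
rewrite (CF_num hCF) -par_card; apply/negPn/negP => /negbTE pc.
have := CF_two hCF hV pc; rewrite Z0.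
by [].
Qed.

Lemma easy_pos : positive_circular f -> two_critical f /\ non_expansive f.
Proof.
move=> [s [G P]]; have hCF := graph_CF G; rewrite (CF_num hCF) -par_card in P.
split; last exact: CF_nonexp hCF.
split; first exact: CF_two hCF hV (negbTE P).
move=> I z _ IP; exact: (CF_subfix_le1 hCF z IP).
Qed.

Lemma easy_neg : negative_circular f -> zero_critical f /\ non_expansive f.
Proof.
move=> [s [G P]]; have hCF := graph_CF G; rewrite (CF_num hCF) -par_card in P.
split; last exact: CF_nonexp hCF.
split; last by move=> I z _ IP; exact: (CF_subfix_ge1 hCF z IP).
apply/eqP; rewrite cards_eq0; apply/eqP/setP => x; rewrite !inE.
apply/negbTE/negP => /eqP fx.
by have := CF_fixed_even hCF fx; rewrite P.
Qed.

End Main.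

Theorem theorem10 (V : finType) (hV : 0 < #|V|) (f : config V -> config V) :
  (positive_circular f <-> two_critical f /\ non_expansive f) /\
  (negative_circular f <-> zero_critical f /\ non_expansive f).
Proof.
split; split.
- exact: (easy_pos hV).
- by case; exact: (hard_pos hV).
- exact: easy_neg.
- by case; exact: (hard_neg hV).
Qed.
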